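(* In the setting below, suppose the Borel sets $A_i$ exist as in the standing assumption and let $\pi(d\theta\mid a)$ be a Markov kernel satisfying the disintegration $\nu(d\theta)=\pi(d\theta\mid a)s(da)$. Define the Markov kernel $\tilde Q_0$ on $\mathcal{B}_1\times\mathcal{X}$ by $\tilde Q_0(A\mid x)=Q(t^{-1}(A)\mid x)$. Then $\tilde Q_0$ is a version of the formal posterior for the model $\tilde P$ and prior $s$, i.e. $\tilde P(dx\mid a)s(da)=\tilde Q_0(da\mid x)M(dx)$ as joint measures on $\mathcal{X}\times[0,\infty)$.
   Context: $(\mathcal{X},\mathcal{B})$ and $(\Theta,\mathcal{C})$ are Polish spaces with Borel $\sigma$-algebras; $\{P(\cdot\mid\theta)\}$ is a Markov kernel on $\mathcal{B}\times\Theta$; $\nu$ is a $\sigma$-finite measure on $\Theta$; the marginal $M(B)=\int P(B\mid\theta)\nu(d\theta)$ is assumed $\sigma$-finite; $Q(d\theta\mid x)$ is a Markov kernel with $P(dx\mid\theta)\nu(d\theta)=Q(d\theta\mid x)M(dx)$ as joint measures. Let $t:\Theta\to[0,\infty)$ be measurable, $\mathcal{B}_1$ the Borel sets of $[0,\infty)$, and $s(A)=\nu(t^{-1}(A))$. Standing assumption: there are disjoint Borel sets $A_1,A_2,\dots$ with $\bigcup_i A_i=[0,\infty)$ and $0<\nu(t^{-1}(A_i))<\infty$ for each $i$. The disintegration $\nu(d\theta)=\pi(d\theta\mid a)s(da)$ means $\int_\Theta f_2(t(\theta))f_1(\theta)\nu(d\theta)=\int_0^\infty f_2(a)\left(\int_\Theta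 f_1(\theta)\pi(d\theta\mid a)\right)s(da)$ for all nonnegative measurable $f_1$ on $\Theta$ and $f_2$ on $[0,\infty)$. The new model is $\tilde P(dx\mid a)=\int_\Theta P(dx\mid\theta)\pi(d\theta\mid a)$. *)

(* Defs.v *)
From HB Require Import structures.
From mathcomp Require Import all_boot all_order all_algebra.
From mathcomp Require Import mathcomp_extra boolp classical_sets functions.
From mathcomp Require Import cardinality fsbigop reals ereal topology.
From mathcomp Require Import normedtype sequences esum measure.
From mathcomp Require Import measurable_realfun numfun lebesgue_measure.
From mathcomp Require Import lebesgue_integral kernel.
Set Implicit Arguments. Unset Strict Implicit. Unset Printing Implicit Defensive.
Import Order.TTheory GRing.Theory Num.Theory.
Local Open Scope classical_set_scope.
Local Open Scope ring_scope.
Local Open Scope ereal_scope.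

Definition joint_kx d d' (X : measurableType d) (Y : measurableType d')
  (R : realType) (m : set Y -> \bar R) (k : Y -> set X -> \bar R)
  (C : set (X * Y)) : \bar R :=
  \int[m]_y k y [set x | C (x, y)].

Definition joint_xk d d' (X : measurableType d) (Y : measurableType d')
  (R : realType) (m : set X -> \bar R) (k : X -> set Y -> \bar R)
  (C : set (X * Y)) : \bar R :=
  \int[m]_x k x [set y | C (x, y)].

Definition Ptilde d d' (X : measurableType d) (Th : measurableType d')
  (R : realType) (P : Th -> set X -> \bar R) (pi : R -> set Th -> \bar R)
  (a : R) (B : set X) : \bar R :=
  \int[pi a]_th P th B.

Definition Qtilde0 d d' (X : measurableType d) (Th : measurableType d')
  (R : realType) (Q : X -> set Th -> \bar R) (t : Th -> R)
  (x : X) (A : set R) : \bar R :=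
  Q x (t @^-1` A).

(* Main.v *)
Require Import Defs.
From HB Require Import structures.
From mathcomp Require Import all_boot all_order all_algebra.
From mathcomp Require Import mathcomp_extra boolp classical_sets functions.
From mathcomp Require Import cardinality fsbigop reals ereal topology.
From mathcomp Require Import normedtype sequences esum measure.
From mathcomp Require Import measurable_realfun numfun lebesgue_measure.
From mathcomp Require Import lebesgue_integral kernel.
Import Order.TTheory GRing.Theory Num.Theory.
Local Open Scope classical_set_scope.
Local Open Scope ring_scope.
Local Open Scope ereal_scope.
Section Psnd.
Context (R : realType) (dT dX : measure_display) (Th : measurableType dT)
  (X : measurableType dX) (d0 : measure_display) (Z : measurableType d0)
  (P : R.-pker Th ~> X).
Definition Psnd (p : Z * Th) : {measure set X -> \bar R} := P p.2.
Lemma measurable_Psnd U : measurable U -> measurable_fun setT (Psnd ^~ U).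
Proof.
move=> mU; exact: (measurableT_comp (measurable_kernel P U mU) measurable_snd).
Qed.
HB.instance Definition _ := isKernel.Build _ _ (Z * Th)%type X R Psnd measurable_Psnd.
Lemma Psnd_prob p : Psnd p setT = 1.
Proof. exact: prob_kernel. Qed.
HB.instance Definition _ := Kernel_isProbability.Build _ _ (Z * Th)%type X R Psnd Psnd_prob.
End Psnd.
Section jkx.
Context d d' (X : measurableType d) (Y : measurableType d') (R : realType).
Variable m : {measure set Y -> \bar R}.
Variable k : Y -> {measure set X -> \bar R}.
Hypothesis mk : forall C : set (X * Y), measurable C ->
  measurable_fun setT (fun y => k y [set x | C (x, y)]).

Definition jkx (_ : forall C : set (X * Y), measurable C ->
  measurable_fun setT (fun y => k y [set x | C (x, y)])) (C : set (X * Y)) := joint_kx m k C.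

Let ms (C : set (X * Y)) y : measurable C -> measurable [set x | C (x, y)].
Proof. by move=> mC; have := measurable_ysection y mC; rewrite ysectionE. Qed.

Let jkx0 : jkx mk set0 = 0.
Proof. by rewrite /jkx /joint_kx (eq_integral (cst 0)) ?integral0// => y _; rewrite measure0. Qed.

Let jkx_ge0 C : 0 <= jkx mk C. Proof. exact: integral_ge0. Qed.

Let jkx_sigma_additive : semi_sigma_additive (jkx mk).
Proof.
move=> U mU tU mUU; rewrite [X in _ --> X](_ : _ =
  \int[m]_y (\sum_(n <oo) k y [set x | U n (x, y)])); last first.
  apply: eq_integral => y _.
  apply/esym/cvg_lim => //; apply: (measure_semi_sigma_additive (fun n => [set x | U n (x, y)])).
  - by move=> n; exact: ms.
  - apply/trivIsetP => i j _ _ ij; apply/seteqP; split => // x [h1 h2].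
    by move/trivIsetP : tU => /(_ i j I I ij); apply/eqP/set0P; exists (x, y).
  - by have := ms _ y mUU; congr measurable; apply/seteqP; split => z /=...
apply/cvg_closeP; split.
  by apply: is_cvg_nneseries => n _ _; exact: integral_ge0.
by rewrite closeE// integral_nneseries// => n; exact: mk.
Qed.

HB.instance Definition _ := isMeasure.Build _ _ R
  (jkx mk) jkx0 jkx_ge0 jkx_sigma_additive.
End jkx.

Section jxk.
Context d d' (X : measurableType d) (Y : measurableType d') (R : realType).
Variable m : {measure set X -> \bar R}.
Variable k : X -> {measure set Y -> \bar R}.
Hypothesis mk : forall C : set (X * Y), measurable C ->
  measurable_fun setT (fun x => k x [set y | C (x, y)]).

Definition jxk (_ : forall C : set (X * Y), measurable C ->
  measurable_fun setT (fun x => k x [set y | C (x, y)])) (C : set (X * Y)) := joint_xk m k C.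

Let ms (C : set (X * Y)) x : measurable C -> measurable [set y | C (x, y)].
Proof. by move=> mC; have := measurable_xsection x mC; rewrite xsectionE. Qed.

Let jxk0 : jxk mk set0 = 0.
Proof. by rewrite /jxk /joint_xk (eq_integral (cst 0)) ?integral0// => y _; rewrite measure0. Qed.

Let jxk_ge0 C : 0 <= jxk mk C. Proof. exact: integral_ge0. Qed.

Let jxk_sigma_additive : semi_sigma_additive (jxk mk).
Proof.
move=> U mU tU mUU; rewrite [X in _ --> X](_ : _ =
  \int[m]_x (\sum_(n <oo) k x [set y | U n (x, y)])); last first.
  apply: eq_integral => x _.
  apply/esym/cvg_lim => //; apply: (measure_semi_sigma_additive (fun n => [set y | U n (x, y)])).
  - by move=> n; exact: ms.
  - apply/trivIsetP => i j _ _ ij; apply/seteqP; split => // y [h1 h2].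
    by move/trivIsetP : tU => /(_ i j I I ij); apply/eqP/set0P; exists (x, y).
  - by have := ms _ x mUU; congr measurable; apply/seteqP; split => z /=...
apply/cvg_closeP; split.
  by apply: is_cvg_nneseries => n _ _; exact: integral_ge0.
by rewrite closeE// integral_nneseries// => n; exact: mk.
Qed.

HB.instance Definition _ := isMeasure.Build _ _ R
  (jxk mk) jxk0 jxk_ge0 jxk_sigma_additive.
End jxk.
Section pfw.
Context d d' (T1 : measurableType d) (T2 : measurableType d') (R : realType).
Variables (m : {measure set T1 -> \bar R}) (f : T1 -> T2).
Definition pfw (_ : measurable_fun [set: T1] f) (A : set T2) := m (f @^-1` A).
Hypothesis mf : measurable_fun [set: T1] f.
Let pfw0 : pfw mf set0 = 0.
Proof. by rewrite /pfw preimage_set0 measure0. Qed.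
Let pfw_ge0 A : 0 <= pfw mf A.
Proof. exact: measure_ge0. Qed.
Let pfw_sigma_additive : semi_sigma_additive (pfw mf).
Proof.
move=> F mF tF mUF; rewrite /pfw preimage_bigcup.
apply: measure_semi_sigma_additive.
- by move=> n; rewrite -[X in measurable X]setTI; exact: mf.
- apply/trivIsetP => /= i j _ _ ij; rewrite -preimage_setI.
  by move/trivIsetP : tF => /(_ _ _ _ _ ij) ->//; rewrite preimage_set0.
- by rewrite -preimage_bigcup -[X in measurable X]setTI; exact: mf.
Qed.
HB.instance Definition _ := isMeasure.Build _ _ _
  (pfw mf) pfw0 pfw_ge0 pfw_sigma_additive.
End pfw.
Theorem theorem3p2 (R : realType)
  (dX dT : measure_display) (X : measurableType dX) (Th : measurableType dT)
  (P : R.-pker Th ~> X) (nu : {measure set Th -> \bar R})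
  (M : {measure set X -> \bar R}) (Q : R.-pker X ~> Th)
  (t : Th -> R) (s : {measure set R -> \bar R}) (pi : R.-pker R ~> Th) :
  sigma_finite setT nu ->
  (forall B, measurable B -> M B = \int[nu]_th P th B) ->
  sigma_finite setT M ->
  (forall C : set (X * Th), measurable C ->
     joint_kx nu (fun th => P th) C = joint_xk M (fun x => Q x) C) ->
  measurable_fun setT t ->
  (forall th, (0 <= t th)%R) ->
  (forall A, measurable A -> s A = nu (t @^-1` A)) ->
  (exists A : (set R)^nat,
     (forall i, measurable (A i)) /\ trivIset setT A /\
     \bigcup_i A i = [set a | (0 <= a)%R] /\
     (forall i, 0 < nu (t @^-1` A i) < +oo)) ->
  (forall (f1 : Th -> R) (f2 : R -> R),
     measurable_fun setT f1 -> (forall th, (0 <= f1 th)%R) ->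
     measurable_fun setT f2 -> (forall a, (0 <= f2 a)%R) ->
     \int[nu]_th (f2 (t th) * f1 th)%:E
       = \int[s]_a ((f2 a)%:E * \int[pi a]_th (f1 th)%:E)) ->
  (forall A, measurable A ->
     measurable_fun [set: X] (fun x : X => Qtilde0 (fun x => Q x) t x A : \bar R)) /\
  (forall x, Qtilde0 (fun x => Q x) t x setT = 1) /\
  (forall C : set (X * R), measurable C ->
     joint_kx s (Ptilde (fun th => P th) (fun a => pi a)) C = joint_xk M (Qtilde0 (fun x => Q x) t) C).
Proof.
move=> _ _ sfM hjoint mt _ _ _ hdis.
have mpre A : measurable A -> measurable (t @^-1` A).
  by move=> mA; rewrite -[X in measurable X]setTI; exact: mt.
split.
  by move=> A mA; exact: (measurable_kernel Q _ (mpre A mA)).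
split.
  by move=> x; rewrite /Qtilde0 preimage_setT; exact: prob_kernel.
move=> C mC.
pose kL := mkcomp pi (Psnd R dT dX Th X _ R P).
pose kR x := @pfw _ _ _ _ R (Q x) t mt.
have mkL : forall C : set (X * R), measurable C ->
    measurable_fun setT (fun a => kL a [set x | C (x, a)]).
  move=> D mD.
  pose D2 := [set z : (R * Th) * X | D (z.2, z.1.1)].
  have mD2 : measurable D2.
    have mf : measurable_fun setT (fun z : (R * Th) * X => (z.2, z.1.1)).
      apply: measurable_fun_pair => //.
      exact: measurableT_comp.
    by rewrite -[X in measurable X]setTI; exact: mf _ _ mD.
  have mk := measurable_fun_xsection_finite_kernel (Psnd R dT dX Th X _ R P) (A := D2).
  have := measurable_fun_integral_finite_kernel
    (fun p : R * Th => Psnd R dT dX Th X _ R P p (xsection D2 p)) pi.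
  move=> /(_ (fun z => measure_ge0 _ _) (mk _)).
  rewrite inE => /(_ mD2).
  move=> h; apply: eq_measurable_fun h => a _; apply: eq_integral => y _.
  by rewrite xsectionE.
have mkR : forall C : set (X * R), measurable C ->
    measurable_fun setT (fun x => kR x [set a | C (x, a)]).
  move=> D mD.
  pose D3 := [set z : X * Th | D (z.1, t z.2)].
  have mD3 : measurable D3.
    have mf : measurable_fun setT (fun z : X * Th => (z.1, t z.2)).
      apply: measurable_fun_pair => //.
      exact: measurableT_comp.
    by rewrite -[X in measurable X]setTI; exact: mf _ _ mD.
  have := measurable_fun_xsection_finite_kernel Q (A := D3).
  rewrite inE => /(_ mD3).
  move=> h; apply: eq_measurable_fun h => x _.
  by rewrite xsectionE.
have [F hF hFm] := sfM.
pose m1 := @jxk _ _ _ _ R M kR mkR.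
pose m2 := @jkx _ _ _ _ R s kL mkL.
have fin th A : measurable A -> P th A = (fine (P th A))%:E.
  move=> mA; rewrite fineK// ge0_fin_numE//.
  apply: (le_lt_trans (le_measure _ (mem_set mA) (mem_set measurableT) (subsetT A))).
  have h1 := @prob_kernel _ _ _ _ _ P th.
  have h2 : P th setT < +oo by rewrite h1 ltry.
  exact: h2.
have rect A B : measurable A -> measurable B -> m1 (A `*` B) = m2 (A `*` B).
  move=> mA mB.
  have e2 : m2 (A `*` B) = \int[s]_a ((\1_B a)%:E * \int[pi a]_th (fine (P th A))%:E).
    apply: eq_integral => a _; rewrite indicE.
    have [aB|aB] := boolP (a \in B).
    - rewrite mul1e; transitivity (kL a A).
        by congr (kL a _); apply/seteqP; split => x /=; [case|move=> ?; split => //; exact/set_mem].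
      by apply: eq_integral => y _; exact: fin.
    - rewrite mul0e; transitivity (kL a set0); last exact: measure0.
      by congr (kL a _); apply/seteqP; split => x //= [_ /mem_set]; rewrite (negbTE aB).
  have e1 : m1 (A `*` B) = \int[nu]_th ((\1_B (t th)) * fine (P th A))%:E.
    transitivity (joint_xk M (fun x => Q x) (A `*` (t @^-1` B))); first by [].
    rewrite -hjoint; last exact: measurableX (mpre B mB).
    apply: eq_integral => th _; rewrite indicE.
    have [aB|aB] := boolP (t th \in B).
    - rewrite mul1r -fin//; congr (P th _).
      by apply/seteqP; split => x /=; [case|move=> ?; split => //; exact/set_mem].
    - rewrite mul0r; transitivity (P th set0); last exact: measure0.
      by congr (P th _); apply/seteqP; split => x //= [_ /mem_set]; rewrite (negbTE aB).
  rewrite e1 e2; apply: hdis.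
  - exact: (measurableT_comp (fine_measurable measurableT) (measurable_kernel P A mA)).
  - by move=> th; rewrite fine_ge0.
  - exact: measurable_indic.
  - by move=> a; rewrite indicE; case: (_ \in _).
pose G := [set A `*` B | A in @measurable _ X & B in @measurable _ R].
have setIG : setI_closed G.
  move=> _ _ [X1 mX1 [X2 mX2 <-]] [Y1 mY1 [Y2 mY2 <-]].
  exists (X1 `&` Y1); first exact: measurableI.
  by exists (X2 `&` Y2); [exact: measurableI|rewrite setXI].
have m1goo k : m1 (F k `*` setT) < +oo.
  have -> : m1 (F k `*` setT) = M (F k).
    transitivity (M (F k `&` setT)); last by rewrite setIT.
    rewrite -integral_indic//; last exact: (hFm k).1.
    apply: eq_integral => x _; rewrite indicE.
    have [xF|xF] := boolP (x \in F k).
    - transitivity (Q x setT); last exact: prob_kernel.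
      by congr (Q x _); apply/seteqP; split => y //= _; split => //; exact/set_mem.
    - transitivity (Q x set0); last exact: measure0.
      by congr (Q x _); apply/seteqP; split => y //= [/mem_set]; rewrite (negbTE xF).
  exact: (hFm k).2.
have cover : \bigcup_k (F k `*` [set: R]) = [set: X * R].
  apply/seteqP; split => // -[x a] _.
  have : [set: X] x by [].
  by rewrite hF => -[k _ Fx]; exists k.
have m1m2 : forall A, G A -> m1 A = m2 A.
  by move=> _ [A mA [B mB <-]]; exact: rect.
have key := measure_unique G (fun k => F k `*` setT) (@measurable_prod_measurableType _ _ X R) setIG
  (fun k => ex_intro2 _ _ (F k) (hFm k).1 (ex_intro2 _ _ setT measurableT erefl))
  cover m1 m2 m1m2 m1goo C mC.
transitivity (m2 C); first by apply: eq_integral.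
transitivity (m1 C); first exact: (esym key).
by apply: eq_integral.
Qed.
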